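(* Let $(X^{(t)})_{t \in \mathbb{N}}$ be a sequence of real-valued random variables with bounded range, and let $(Y^{(t)})_{t \in \mathbb{N}}$ be a sequence of real-valued random variables that are zero-mean, range-bounded, and independent and identically distributed. Suppose the sequences $(X^{(t)})_{t \in \mathbb{N}}$ and $(Y^{(t)})_{t \in \mathbb{N}}$ are independent of each other. Define $Z^{(t)} \coloneqq X^{(t)} Y^{(t)}$. Then \[ \lim_{k \to \infty} \frac{1}{k+1}\sum_{t=0}^{k} Z^{(t)} = 0 \quad \text{almost surely.} \]
   Context: All random variables are defined on a common probability space. ''Bounded range'' means the random variables take values in a bounded subset of $\mathbb{R}$. *)

(* Defs.v *)
From HB Require Import structures.
From mathcomp Require Import all_boot all_order all_algebra.
From mathcomp Require Import all_classical all_reals all_analysis.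
Set Implicit Arguments. Unset Strict Implicit. Unset Printing Implicit Defensive.
Import Order.TTheory GRing.Theory Num.Theory.
Import numFieldNormedType.Exports.
Local Open Scope classical_set_scope.
Local Open Scope ring_scope.

Definition mutually_independent d (T : measurableType d) (R : realType)
  (P : probability T R) (X : nat -> T -> R) : Prop :=
  forall (s : seq nat) (B : nat -> set R),
    uniq s -> (forall i, measurable (B i)) ->
    P (\big[setI/setT]_(i <- s) (X i @^-1` B i)) =
    (\prod_(i <- s) P (X i @^-1` B i))%E.

Definition identically_distributed d (T : measurableType d) (R : realType)
  (P : probability T R) (X : nat -> T -> R) : Prop :=
  forall (t : nat) (B : set R), measurable B ->
    P (X t @^-1` B) = P (X 0%N @^-1` B).

(* the sequences X and Y are independent of each other: every finite-dimensional
   event of X is independent of every finite-dimensional event of Y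
   (i.e. sigma(X t, t in N) and sigma(Y t, t in N) are independent) *)
Definition independent_seqs d (T : measurableType d) (R : realType)
  (P : probability T R) (X Y : nat -> T -> R) : Prop :=
  forall (s1 s2 : seq nat) (B C : nat -> set R),
    (forall i, measurable (B i)) -> (forall i, measurable (C i)) ->
    let EX := \big[setI/setT]_(i <- s1) (X i @^-1` B i) in
    let EY := \big[setI/setT]_(j <- s2) (Y j @^-1` C j) in
    P (EX `&` EY) = (P EX * P EY)%E.

(* Main.v *)
Require Import Defs.
From HB Require Import structures.
From mathcomp Require Import all_boot all_order all_algebra.
From mathcomp Require Import all_classical all_reals all_analysis.
From mathcomp Require Import measurable_realfun.
From mathcomp Require Import ring lra zify.
Set Implicit Arguments. Unset Strict Implicit. Unset Printing Implicit Defensive.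
Import Order.TTheory GRing.Theory Num.Theory.
Import numFieldNormedType.Exports.
Local Open Scope classical_set_scope.
Local Open Scope ring_scope.

Section RExp.
Context d (T : measurableType d) (R : realType) (P : probability T R).

Definition bmf (f : T -> R) :=
  measurable_fun setT f /\ exists M : R, forall x, `|f x| <= M.

Lemma bmf_Lfun f : bmf f -> f \in Lfun P 1.
Proof.
move=> [mf [M hM]]; apply/Lfun1_integrable.
apply: measurable_bounded_integrable => //.
- by rewrite ltey_eq fin_num_measure.

- exists M; split; first by rewrite num_real.
  by move=> M' hM' x _ /=; rewrite (le_trans (hM x))// ltW.
Qed.

Definition RE (f : T -> R) : R := fine ('E_P[f])%E.

Lemma REE f : bmf f -> ('E_P[f] = (RE f)%:E)%E.
Proof. by move=> /bmf_Lfun /(expectation_fin_num) h; rewrite /RE fineK. Qed.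

Lemma bmf_cst c : bmf (cst c).
Proof. by split => //; exists `|c| => x. Qed.

Lemma bmfD f g : bmf f -> bmf g -> bmf (f \+ g).
Proof.
move=> [mf [M hM]] [mg [N hN]]; split; first exact: measurable_funD.
by exists (M + N) => x; rewrite (le_trans (ler_normD _ _))// lerD.
Qed.

Lemma bmfM f g : bmf f -> bmf g -> bmf (f \* g).
Proof.
move=> [mf [M hM]] [mg [N hN]]; split; first exact: measurable_funM.
exists (M * N) => x; rewrite normrM ler_pM//.
Qed.

Lemma bmfN f : bmf f -> bmf (\- f).
Proof.
move=> [mf [M hM]]; split; first exact: measurableT_comp.
by exists M => x; rewrite normrN.
Qed.

Lemma bmf_indic A : measurable A -> bmf (\1_A).
Proof.
move=> mA; split; first exact: measurable_indic.
exists 1 => x; rewrite /indic; case: (_ \in _) => /=; rewrite ?normr0 ?normr1//.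
Qed.

Lemma bmf_sum (I : Type) (s : seq I) (F : I -> T -> R) :
  (forall i, bmf (F i)) -> bmf (fun x => \sum_(i <- s) F i x).
Proof.
move=> hF; elim: s => [|i s IH].
  by under eq_fun do rewrite big_nil; exact: bmf_cst.
under eq_fun do rewrite big_cons.
exact: bmfD.
Qed.

Lemma REcst c : RE (cst c) = c.
Proof. by rewrite /RE expectation_cst. Qed.

Lemma RED f g : bmf f -> bmf g -> RE (f \+ g) = RE f + RE g.
Proof.
move=> hf hg; rewrite /RE expectationD ?bmf_Lfun// (REE hf) (REE hg) //.
Qed.

Lemma REZ k f : bmf f -> RE (fun x => k * f x) = k * RE f.
Proof.
move=> hf; have -> : (fun x => k * f x) = k \o* f by apply/funext => x /=; rewrite /GRing.mul_fun mulrC.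
by rewrite /RE expectationZl ?bmf_Lfun// (REE hf).
Qed.

Lemma REN f : bmf f -> RE (\- f) = - RE f.
Proof.
move=> hf; have -> : (\- f) = (fun x => -1 * f x) by apply/funext => x /=; rewrite mulN1r.
by rewrite REZ// mulN1r.
Qed.

Lemma REB f g : bmf f -> bmf g -> RE (f \- g) = RE f - RE g.
Proof. by move=> hf hg; rewrite RED ?REN//; exact: bmfN. Qed.

Lemma RE_sum (I : Type) (s : seq I) (F : I -> T -> R) :
  (forall i, bmf (F i)) -> RE (fun x => \sum_(i <- s) F i x) = \sum_(i <- s) RE (F i).
Proof.
move=> hF; elim: s => [|i s IH].
  by under eq_fun do rewrite big_nil; rewrite big_nil REcst.
under eq_fun do rewrite big_cons.
by rewrite RED ?IH ?big_cons//; exact: bmf_sum.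
Qed.

Lemma RE_indic A : measurable A -> RE (\1_A) = fine (P A).
Proof. by move=> mA; rewrite /RE expectation_indic. Qed.

Lemma RE_ge0 f : (forall x, 0 <= f x) -> 0 <= RE f.
Proof. by move=> h; rewrite /RE fine_ge0// expectation_ge0. Qed.

Lemma RE_le f g : bmf f -> bmf g -> (forall x, f x <= g x) -> RE f <= RE g.
Proof.
move=> hf hg h; rewrite -subr_ge0 -REB//; apply: RE_ge0 => x /=.
by rewrite subr_ge0.
Qed.

Lemma RE_ext f g : f =1 g -> RE f = RE g.
Proof. by move=> /funext ->. Qed.

Lemma RE_abs f c : bmf f -> (forall x, `|f x| <= c) -> `|RE f| <= c.
Proof.
move=> hf h; rewrite ler_norml; apply/andP; split.
  have := @RE_le (cst (- c)) f (bmf_cst _) hf; rewrite REcst; apply.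
  by move=> x /=; have := h x; rewrite ler_norml => /andP[].
have := @RE_le f (cst c) hf (bmf_cst _); rewrite REcst; apply.
by move=> x /=; have := h x; rewrite ler_norml => /andP[].
Qed.

Lemma fineP A : measurable A -> (P A)%E = (fine (P A))%:E.
Proof. by move=> mA; rewrite fineK// fin_num_measure. Qed.

End RExp.



Section Disc.
Context d (T : measurableType d) (R : realType) (P : probability T R).

Lemma small0 (x C : R) : (forall n : nat, (0 < n)%N -> `|x| <= C / n%:R) -> x = 0.
Proof.
move=> h; apply/eqP; rewrite -normr_eq0; apply/eqP.
have [->//|xn0] := eqVneq `|x| 0.
have x0 : 0 < `|x| by rewrite lt_neqAle eq_sym xn0 normr_ge0.
pose n := (Num.Def.archi_bound (`|C| / `|x|)).+1.
have := h n erefl.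
have hb := @archi_boundP R (`|C| / `|x|) (divr_ge0 (normr_ge0 _) (normr_ge0 _)).
have n0 : 0 < n%:R :> R by rewrite ltr0n.
have : `|C| / `|x| < n%:R.
  by rewrite (lt_le_trans hb)// ler_nat /n.
rewrite ltr_pdivrMr// => h1 h2.
have : `|x| * n%:R <= C by rewrite -ler_pdivlMr.
move=> h3; rewrite mulrC in h3; have := lt_le_trans h1 (le_trans h3 (ler_norm C)).
by rewrite ltxx.
Qed.

Definition cc (n N i : nat) : R := (i%:R - (N * n)%:R) / n%:R.
Definition Bq (n N i : nat) : set R := [set x | cc n N i <= x < cc n N i.+1].

Lemma ccS n N i : (0 < n)%N -> cc n N i.+1 = cc n N i + n%:R^-1.
Proof.
move=> n0; rewrite /cc -[X in _ = _ + X]mul1r -mulrDl; congr (_ / _).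
by rewrite -natr1 addrAC.
Qed.

Lemma cc_le n N i j : (0 < n)%N -> (i <= j)%N -> cc n N i <= cc n N j.
Proof.
move=> n0 ij; rewrite /cc ler_pM2r ?invr_gt0 ?ltr0n//.
by rewrite lerD2r ler_nat.
Qed.

Lemma cc0 n N : (0 < n)%N -> cc n N 0 = - N%:R.
Proof.
move=> n0; rewrite /cc sub0r mulNr natrM -mulrA mulfV ?mulr1// pnatr_eq0 -lt0n//.
Qed.

Lemma ccL n N : (0 < n)%N -> cc n N (2 * N * n) = N%:R.
Proof.
move=> n0; rewrite /cc -mulnA mul2n -addnn natrD addrK natrM -mulrA mulfV ?mulr1//.
by rewrite pnatr_eq0 -lt0n//.
Qed.

Lemma Bq_meas n N i : measurable (Bq n N i).
Proof.
have -> : Bq n N i = [set` `[cc n N i, cc n N i.+1[] .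
  by apply/seteqP; split => x /=; rewrite in_itv.
exact: measurable_itv.
Qed.

Lemma Bq_ex n N x : (0 < n)%N -> - N%:R <= x < N%:R ->
  exists2 i, (i < 2 * N * n)%N & Bq n N i x.
Proof.
move=> n0; rewrite -(cc0 N n0) -(ccL N n0); elim: (2 * N * n)%N => [|L IH].
  by case/andP=> h1 h2; have := le_lt_trans h1 h2; rewrite ltxx.
case/andP => h1 h2; have [h3|h3] := ltP x (cc n N L).
  by have [i iL Bi] := IH (introT andP (conj h1 h3)); exists i => //; exact: ltnW.
by exists L => //; rewrite /Bq /= h3.
Qed.

Lemma Bq_uniq n N i j x : (0 < n)%N -> Bq n N i x -> Bq n N j x -> i = j.
Proof.
move=> n0 /andP[hi1 hi2] /andP[hj1 hj2].
have [ij|ji|//] := ltngtP i j.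
  have := cc_le N n0 ij => h; have := lt_le_trans hi2 (le_trans h hj1).
  by rewrite ltxx.
have := cc_le N n0 ji => h; have := lt_le_trans hj2 (le_trans h hi1).
by rewrite ltxx.
Qed.

Definition q (n N : nat) (V : T -> R) (w : T) : R :=
  \sum_(i < 2 * N * n) cc n N i * \1_(V @^-1` Bq n N i) w.

Lemma qE n N V w : (0 < n)%N -> `|V w| < N%:R ->
  exists2 i, Bq n N i (V w) & q n N V w = cc n N i.
Proof.
move=> n0; rewrite ltr_norml => /andP[hV1 hV2].
have [i iL Bi] := Bq_ex n0 (introT andP (conj (ltW hV1) hV2)).
exists i => //; rewrite /q (bigD1 (Ordinal iL))//= big1 ?addr0.
  by rewrite indicE mem_set// mulr1.
move=> j /eqP ji; rewrite indicE memNset ?mulr0// => Bj.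
by apply: ji; apply/val_inj => /=; exact: (Bq_uniq n0 Bj Bi).
Qed.

Lemma q_err n N V w : (0 < n)%N -> `|V w| < N%:R ->
  `|q n N V w - V w| <= n%:R^-1.
Proof.
move=> n0 hV; have [i /andP[h1 h2] ->] := qE n0 hV.
rewrite ccS// in h2.
by rewrite ler0_norm ?subr_le0// opprB lerBlDl ltW// addrC.
Qed.

Lemma q_bnd n N V w : (0 < n)%N -> `|V w| < N%:R -> `|q n N V w| <= N%:R.
Proof.
move=> n0 hV; have [i /andP[h1 h2] ->] := qE n0 hV.
have := hV; rewrite ltr_norml => /andP[hl hr].
rewrite ler_norml; apply/andP; split; last by rewrite ltW// (le_lt_trans h1).
by rewrite -(cc0 N n0) cc_le.
Qed.

Lemma preim_meas (V : T -> R) (B : set R) :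
  measurable_fun setT V -> measurable B -> measurable (V @^-1` B).
Proof. by move=> mV mB; rewrite -[V @^-1` _]setTI; exact: mV. Qed.

Lemma bmf_q n N V : measurable_fun setT V -> bmf (q n N V).
Proof.
move=> mV; rewrite /q; apply: bmf_sum.
move=> i; have -> : (fun w => cc n N i * \1_(V @^-1` Bq n N i) w) = cst (cc n N i) \* \1_(V @^-1` Bq n N i) by [].
apply: bmfM; first exact: bmf_cst.
by apply: bmf_indic; apply: preim_meas => //; exact: Bq_meas.
Qed.

End Disc.


Section Indep.
Context d (T : measurableType d) (R : realType) (P : probability T R).

Lemma bmf_meas (f : T -> R) : bmf f -> measurable_fun setT f.
Proof. by case. Qed.

Lemma RE_q (n N : nat) (W : T -> R) : measurable_fun setT W ->
  RE P (q n N W) = \sum_(i < 2 * N * n) cc R n N i * fine (P (W @^-1` Bq n N i)).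
Proof.
move=> mW; rewrite /q RE_sum.
  apply: eq_bigr => i _; rewrite REZ ?RE_indic//.
    by apply: preim_meas => //; exact: Bq_meas.
  by apply: bmf_indic; apply: preim_meas => //; exact: Bq_meas.
move=> i; apply: (@bmfM _ _ _ (cst (cc R n N i))); first exact: bmf_cst.
by apply: bmf_indic; apply: preim_meas => //; exact: Bq_meas.
Qed.

Lemma RE_Eq (n N : nat) (E : set T) (W : T -> R) : measurable E -> measurable_fun setT W ->
  RE P (\1_E \* q n N W) =
  \sum_(i < 2 * N * n) cc R n N i * fine (P (E `&` W @^-1` Bq n N i)).
Proof.
move=> mE mW.
have mA : forall i, measurable (E `&` W @^-1` Bq n N i).
  by move=> i; apply: measurableI => //; apply: preim_meas => //; exact: Bq_meas.
rewrite (@RE_ext _ _ _ _ _ (fun w => \sum_(i < 2 * N * n) cc R n N i * \1_(E `&` W @^-1` Bq n N i) w)).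
  rewrite RE_sum.
    by apply: eq_bigr => i _; rewrite REZ ?RE_indic//; exact: bmf_indic.
  move=> i; apply: (@bmfM _ _ _ (cst (cc R n N i))); first exact: bmf_cst.
  exact: bmf_indic.
move=> w /=; rewrite /q mulr_sumr; apply: eq_bigr => i _.
by rewrite indicI mulrCA.
Qed.

Lemma indep0 (N : nat) (E : set T) (W : T -> R) :
  measurable E -> measurable_fun setT W -> (forall w, `|W w| < N%:R) ->
  RE P W = 0 ->
  (forall C, measurable C -> P (E `&` W @^-1` C) = (P E * P (W @^-1` C))%E) ->
  RE P (\1_E \* W) = 0.
Proof.
move=> mE mW WN W0 hind.
have bW : bmf W by split => //; exists N%:R => w; exact: ltW.
have bE : bmf (\1_E : T -> R) by exact: bmf_indic.
apply: (@small0 _ _ 2) => n n0.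
have e1 : RE P (\1_E \* q n N W) = fine (P E) * RE P (q n N W).
  rewrite RE_Eq// RE_q// mulr_sumr; apply: eq_bigr => i _.
  rewrite hind; last exact: Bq_meas.
  rewrite fineM ?fin_num_measure//; last by apply: preim_meas => //; exact: Bq_meas.
  by rewrite mulrCA.
have bq := bmf_q n N mW.
have h1 : `|RE P (\1_E \* W) - RE P (\1_E \* q n N W)| <= n%:R^-1.
  rewrite -REB; [|exact: bmfM|exact: bmfM].
  apply: RE_abs; first by apply: bmfD; [exact: bmfM|apply: bmfN; exact: bmfM].
  move=> w /=; rewrite -mulrBr normrM.
  rewrite -[X in _ <= X]mul1r; apply: ler_pM => //.
    by rewrite indicE; case: (_ \in _); rewrite ?normr1 ?normr0.
  by rewrite -normrN opprB q_err.
have h2 : `|RE P (q n N W)| <= n%:R^-1.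
  rewrite -[RE P (q n N W)]subr0 -W0 -REB//.
  apply: RE_abs; first by apply: bmfD => //; exact: bmfN.
  by move=> w /=; rewrite q_err.
have hPE : `|fine (P E)| <= 1.
  rewrite ger0_norm ?fine_ge0//.
  by rewrite -lee_fin -fineP// probability_le1.
rewrite -[RE P (\1_E \* W)](subrK (RE P (\1_E \* q n N W))).
apply: (le_trans (ler_normD _ _)); rewrite mulr2n mulrDl mul1r; apply: lerD => //.
rewrite e1 normrM -[X in _ <= X]mul1r; apply: ler_pM => //.
Qed.

End Indep.


Section Cross.
Context d (T : measurableType d) (R : realType) (P : probability T R).

Lemma RE_q_mul0 (n N : nat) (V r : T -> R) : measurable_fun setT V -> bmf r ->
  (forall i : 'I_(2 * N * n), RE P (\1_(V @^-1` Bq n N i) \* r) = 0) ->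
  RE P (q n N V \* r) = 0.
Proof.
move=> mV br h.
have mA : forall i, measurable (V @^-1` Bq n N i).
  by move=> i; apply: preim_meas => //; exact: Bq_meas.
rewrite (@RE_ext _ _ _ _ _ (fun w => \sum_(i < 2 * N * n) cc R n N i * (\1_(V @^-1` Bq n N i) \* r) w)).
  rewrite RE_sum; first by rewrite big1// => i _; rewrite REZ ?h ?mulr0//; apply: bmfM => //; exact: bmf_indic.
  move=> i; apply: (@bmfM _ _ _ (cst (cc R n N i))); first exact: bmf_cst.
  by apply: bmfM => //; exact: bmf_indic.
by move=> w /=; rewrite /q mulr_suml; apply: eq_bigr => i _; rewrite mulrA.
Qed.

Lemma prod3_err (x y z x' y' z' M e : R) :
  `|x| <= M -> `|y| <= M -> `|z| <= M -> `|x'| <= M -> `|y'| <= M ->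
  `|x - x'| <= e -> `|y - y'| <= e -> `|z - z'| <= e ->
  `|x * y * z - x' * y' * z'| <= 3 * (M * M * e).
Proof.
move=> hx hy hz hx' hy' ex ey ez.
have -> : x * y * z - x' * y' * z' = (x - x') * y * z + x' * (y - y') * z + x' * y' * (z - z') by ring.
have M0 : 0 <= M by rewrite (le_trans _ hx).
have e0 : 0 <= e by rewrite (le_trans _ ex).
have t1 : `|(x - x') * y * z| <= M * M * e.
  by rewrite !normrM [M * M * e]mulrC mulrA ler_pM ?ler_pM// ?mulr_ge0.
have t2 : `|x' * (y - y') * z| <= M * M * e.
  by rewrite !normrM [M * M * e]mulrAC ler_pM ?ler_pM// ?mulr_ge0.
have t3 : `|x' * y' * (z - z')| <= M * M * e.
  by rewrite !normrM ler_pM ?ler_pM// ?mulr_ge0.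
rewrite (le_trans (ler_normD _ _))// (le_trans (lerD (ler_normD _ _) (lexx _)))//.
by rewrite mulr_natl mulrS mulr2n addrA !lerD.
Qed.

Variables (X Y : nat -> T -> R) (N : nat).
Hypothesis mX : forall t, measurable_fun setT (X t).
Hypothesis mY : forall t, measurable_fun setT (Y t).
Hypothesis XN : forall t w, `|X t w| < N%:R.
Hypothesis YN : forall t w, `|Y t w| < N%:R.
Hypothesis Y0 : forall t, RE P (Y t) = 0.
Hypothesis hYind : mutually_independent P Y.
Hypothesis hXY : independent_seqs P X Y.

Lemma rect_indep (a b : nat) (B1 B2 B3 C : set R) : a != b ->
  measurable B1 -> measurable B2 -> measurable B3 -> measurable C ->
  P (((X a @^-1` B1 `&` X b @^-1` B2) `&` Y a @^-1` B3) `&` Y b @^-1` C) =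
  (P ((X a @^-1` B1 `&` X b @^-1` B2) `&` Y a @^-1` B3) * P (Y b @^-1` C))%E.
Proof.
move=> ab m1 m2 m3 mC.
pose B' i := if i == a then B1 else B2.
pose C' i := if i == a then B3 else C.
have mB' : forall i, measurable (B' i) by move=> i; rewrite /B'; case: ifP.
have mC' : forall i, measurable (C' i) by move=> i; rewrite /C'; case: ifP.
have h1 := hXY [:: a; b] [:: a; b] mB' mC'.
have h2 := hXY [:: a; b] [:: a] mB' mC'.
have u : uniq [:: a; b] by rewrite /= inE ab.
have h3 := hYind u mC'.
have ba : (b == a) = false by apply/negbTE; rewrite eq_sym.
move: h1 h2 h3; rewrite /= !big_cons !big_nil !setIT /B' /C' eqxx ba /= => h1 h2 h3.
rewrite mule1 in h3.
by rewrite -setIA h1 h3 h2 muleA.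
Qed.


Lemma bX t : bmf (X t).
Proof. by split => //; exists N%:R => w; exact: ltW. Qed.
Lemma bY t : bmf (Y t).
Proof. by split => //; exists N%:R => w; exact: ltW. Qed.

Lemma cross0 a b : a != b ->
  RE P (fun w => (X a w * Y a w) * (X b w * Y b w)) = 0.
Proof.
move=> ab.
have mB : forall (V : T -> R) n i, measurable_fun setT V -> measurable (V @^-1` Bq n N i).
  by move=> V n i mV; apply: preim_meas => //; exact: Bq_meas.
have G0 : forall n, (0 < n)%N ->
    RE P (q n N (X a) \* (q n N (X b) \* (q n N (Y a) \* Y b))) = 0.
  move=> n n0.
  apply: RE_q_mul0; first exact: mX.
    by apply: bmfM; [exact: bmf_q|apply: bmfM; [exact: bmf_q|exact: bY]].
  move=> i.
  rewrite (@RE_ext _ _ _ _ _ (q n N (X b) \* (\1_(X a @^-1` Bq n N i) \* (q n N (Y a) \* Y b)))); last first.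
    by move=> w /=; rewrite mulrCA.
  apply: RE_q_mul0; first exact: mX.
    apply: bmfM; first by apply: bmf_indic; exact: mB.
    by apply: bmfM; [exact: bmf_q|exact: bY].
  move=> j.
  rewrite (@RE_ext _ _ _ _ _ (q n N (Y a) \* (\1_(X b @^-1` Bq n N j) \* (\1_(X a @^-1` Bq n N i) \* Y b)))); last first.
    by move=> w /=; ring.
  apply: RE_q_mul0; first exact: mY.
    apply: bmfM; first by apply: bmf_indic; exact: mB.
    by apply: bmfM; [apply: bmf_indic; exact: mB|exact: bY].
  move=> k.
  rewrite (@RE_ext _ _ _ _ _ (\1_((X a @^-1` Bq n N i `&` X b @^-1` Bq n N j) `&` Y a @^-1` Bq n N k) \* Y b)); last first.
    by move=> w /=; rewrite !indicI /=; ring.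
  apply: (@indep0 _ _ _ _ N) => //.
    by apply: measurableI; [apply: measurableI|]; exact: mB.
  move=> C mC; apply: rect_indep => //; exact: Bq_meas.
apply: (@small0 _ _ (3 * (N%:R * N%:R * N%:R))) => n n0.
have bqa := bmf_q n N (mX a).
have bqb := bmf_q n N (mX b).
have bqc := bmf_q n N (mY a).
have bG : bmf (q n N (X a) \* (q n N (X b) \* (q n N (Y a) \* Y b))).
  by apply: bmfM => //; apply: bmfM => //; apply: bmfM => //; exact: bY.
have bF : bmf (fun w => X a w * Y a w * (X b w * Y b w)).
  by apply: (@bmfM _ _ _ (X a \* Y a) (X b \* Y b)); apply: bmfM; [exact: bX|exact: bY|exact: bX|exact: bY].
rewrite -[RE P _]subr0 -(G0 n n0) -REB//.
apply: RE_abs; first by apply: bmfD => //; exact: bmfN.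
move=> w /=.
have -> : X a w * Y a w * (X b w * Y b w) - q n N (X a) w * (q n N (X b) w * (q n N (Y a) w * Y b w)) =
  (X a w * X b w * Y a w - q n N (X a) w * q n N (X b) w * q n N (Y a) w) * Y b w by ring.
rewrite normrM.
have N0 : 0 <= N%:R :> R by [].
apply: (le_trans (y := 3 * (N%:R * N%:R * n%:R^-1) * N%:R)).
  apply: ler_pM => //; last exact: ltW.
  apply: prod3_err; first [exact: ltW | by apply: q_bnd | by rewrite distrC; apply: q_err].
rewrite le_eqVlt; apply/orP; left; apply/eqP; ring.
Qed.

End Cross.


Lemma sqrt_floor (K1 : nat) : (1 <= K1)%N ->
  exists2 r, (1 <= r)%N & (r * r <= K1 < r.+1 * r.+1)%N.
Proof.
elim: K1 => [//|K1 IH] _.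
case: K1 IH => [|K1] IH; first by exists 1%N.
have [r r1 /andP[h1 h2]] := IH isT.
have [h3|h3] := ltnP K1.+2 (r.+1 * r.+1).
  by exists r => //; apply/andP; split => //; lia.
exists r.+1 => //; apply/andP; split; nia.
Qed.

Lemma lip (R : realType) (K : R) (s : nat -> R) : (forall n, `|s n.+1 - s n| <= K) ->
  forall n m, (n <= m)%N -> `|s m - s n| <= K * (m - n)%:R.
Proof.
move=> h n m nm.
suff H : forall k, `|s (n + k)%N - s n| <= K * k%:R.
  by have := H (m - n)%N; rewrite subnKC.
elim=> [|k IH]; first by rewrite addn0 subrr normr0 mulr0.
have -> : s (n + k.+1)%N - s n = (s (n + k).+1 - s (n + k)%N) + (s (n + k)%N - s n).
  by rewrite addnS; ring.
rewrite (le_trans (ler_normD _ _))// -natr1 mulrDr mulr1 addrC lerD// ?h//.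
Qed.

Lemma det (R : realType) (K : R) (s : nat -> R) : 0 <= K ->
  (forall n, `|s n.+1 - s n| <= K) ->
  (forall j : nat, exists n0, forall k, (n0 <= k)%N ->
      `|s ((k.+1) * (k.+1))%N| <= (j.+1)%:R^-1 * ((k.+1) * (k.+1))%N%:R) ->
  (fun k => k.+1%:R^-1 * s k.+1) @ \oo --> (0 : R).
Proof.
move=> K0 hK H; apply/cvgrPdist_le => e e0.
pose j := Num.Def.archi_bound (2 / e).
have hj : 2 / e < j.+1%:R.
  by rewrite (lt_le_trans (archi_boundP _)) ?ler_nat// divr_ge0// ltW.
pose R0 := Num.Def.archi_bound (4 * K / e).
have hR0 : 4 * K / e < R0%:R.
  by apply: archi_boundP; apply: divr_ge0; [apply: mulr_ge0|apply: ltW].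
have [n0 hn] := H j.
exists (maxn n0.+1 R0 * maxn n0.+1 R0)%N => // k /= hk.
have [r r1 /andP[hr1 hr2]] := sqrt_floor (ltn0Sn k).
have rM : (maxn n0.+1 R0 <= r)%N.
  rewrite leqNgt; apply/negP => hr.
  have : (r.+1 * r.+1 <= maxn n0.+1 R0 * maxn n0.+1 R0)%N by apply: leq_mul.
  lia.
case: r r1 hr1 hr2 rM => [//|r'] _ hr1 hr2 rM.
have hs := hn r' (leq_trans (leq_maxl _ _) rM).
have hl := lip hK hr1.
have hd : ((k.+1 - r'.+1 * r'.+1) <= 2 * r'.+1)%N by lia.
have hd' : (k.+1 - r'.+1 * r'.+1)%:R <= 2 * r'.+1%:R :> R.
  by rewrite -natrM ler_nat.
set x : R := k.+1%:R.
set y : R := r'.+1%:R.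
have x0 : 0 < x by rewrite ltr0n.
have y1 : 1 <= y by rewrite ler1n.
have yx : y * y <= x by rewrite -natrM ler_nat.
have yR : R0%:R <= y by rewrite ler_nat (leq_trans (leq_maxr n0.+1 _)).
have a0 : 0 < j.+1%:R^-1 :> R by rewrite invr_gt0 ltr0n.
have ae : j.+1%:R^-1 <= e / 2 :> R.
  rewrite -[e / 2]invrK lef_pV2 ?posrE ?invr_gt0 ?divr_gt0// ?ltr0n// ?invf_div ltW//.
have Ke : 4 * K < e * y.
  rewrite -ltr_pdivrMl//; rewrite mulrC; apply: (lt_le_trans hR0) => //.
have hsk : `|s k.+1| <= j.+1%:R^-1 * (y * y) + K * (2 * y).
  have -> : s k.+1 = (s k.+1 - s (r'.+1 * r'.+1)%N) + s (r'.+1 * r'.+1)%N by ring.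
  rewrite (le_trans (ler_normD _ _))// addrC lerD//.
    by move: hs; rewrite natrM.
  by rewrite (le_trans hl)// ler_wpM2l.
rewrite sub0r normrN normrM ger0_norm ?invr_ge0 ?ler0n//.
rewrite ler_pdivrMl//; apply: (le_trans hsk).
have t1 : j.+1%:R^-1 * (y * y) <= e / 2 * x.
  by apply: ler_pM => //; rewrite ?mulr_ge0 ?ltW.
have t2 : K * (2 * y) <= e / 2 * x.
  have : K * (2 * y) <= e / 2 * (y * y) by nra.
  move=> h; apply: (le_trans h); apply: ler_wpM2l => //; apply: divr_ge0 => //; exact: ltW.
apply: (le_trans (lerD t1 t2)); lra.
Qed.


Lemma partial_inv_sq (R : realType) n :
  \sum_(0 <= k < n) ((k.+1 * k.+1)%:R : R)^-1 <= 2 - 2 / n.+1%:R.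
Proof.
elim: n => [|n IH]; first by rewrite big_geq// divr1 subrr.
rewrite big_nat_recr//= (le_trans (lerD IH (lexx _)))//.
set x : R := n.+1%:R.
have x0 : 0 < x by rewrite ltr0n.
have -> : (n.+1 * n.+1)%:R = x * x by rewrite natrM.
have -> : n.+2%:R = x + 1 by rewrite -natr1.
rewrite -addrA lerD2l.
have hn := ler0n R n.
rewrite -subr_ge0.
have -> : - (2 / (x + 1)) - (- (2 / x) + (x * x)^-1) = (x - 1) / (x * x * (x + 1)).
  field; apply/andP; split; rewrite gt_eqF //; lra.
rewrite divr_ge0//; last by apply: mulr_ge0; [apply: mulr_ge0; apply: ltW|]; lra.
by rewrite subr_ge0 /x ler1n.
Qed.

Lemma series_bnd (R : realType) (C : R) : 0 <= C ->
  (\sum_(k <oo) ((C / (k.+1 * k.+1)%:R)%:E) < +oo)%E.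
Proof.
move=> C0.
apply: (@le_lt_trans _ _ (2 * C)%:E); last by rewrite ltry.
apply: lime_le.
  apply: is_cvg_ereal_nneg_natsum => n _; rewrite lee_fin divr_ge0//.
apply: nearW => n; rewrite sumEFin lee_fin.
rewrite -mulr_sumr mulrC ler_pM//.
  by rewrite sumr_ge0// => k _; rewrite invr_ge0.
rewrite (le_trans (partial_inv_sq _ n))// lerBlDr lerDl divr_ge0//.
Qed.


Section Moment.
Context d (T : measurableType d) (R : realType) (P : probability T R).
Variables (X Y : nat -> T -> R) (N : nat).
Hypothesis mX : forall t, measurable_fun setT (X t).
Hypothesis mY : forall t, measurable_fun setT (Y t).
Hypothesis XN : forall t w, `|X t w| < N%:R.
Hypothesis YN : forall t w, `|Y t w| < N%:R.
Hypothesis Y0 : forall t, RE P (Y t) = 0.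
Hypothesis hYind : mutually_independent P Y.
Hypothesis hXY : independent_seqs P X Y.

Let K : R := N%:R * N%:R.
Definition Zf t w := X t w * Y t w.
Definition Sf n w := \sum_(t < n) Zf t w.

Lemma bZ t : bmf (Zf t).
Proof. exact: (bmfM (bX mX XN t) (bY mY YN t)). Qed.

Lemma Z_bnd t w : `|Zf t w| <= K.
Proof. by rewrite /Zf normrM ler_pM// ltW. Qed.

Lemma bS n : bmf (Sf n).
Proof. by apply: bmf_sum => t; exact: bZ. Qed.

Lemma S2_bnd n : RE P (fun w => Sf n w ^+ 2) <= n%:R * (K * K).
Proof.
rewrite (@RE_ext _ _ _ _ _ (fun w => \sum_(a < n) \sum_(b < n) Zf a w * Zf b w)); last first.
  by move=> w; rewrite /Sf expr2 big_distrl /=; apply: eq_bigr => a _; rewrite big_distrr.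
rewrite RE_sum; last by move=> a; apply: bmf_sum => b; apply: bmfM; exact: bZ.
have -> : \sum_(a < n) RE P (fun w => \sum_(b < n) Zf a w * Zf b w) =
          \sum_(a < n) RE P (fun w => Zf a w * Zf a w).
  apply: eq_bigr => a _; rewrite RE_sum; last by move=> b; apply: bmfM; exact: bZ.
  rewrite (bigD1 a)//= big1 ?addr0// => b ba.
  have := @cross0 _ _ _ _ _ _ _ mX mY XN YN Y0 hYind hXY a b.
  by rewrite eq_sym ba => /(_ isT).
apply: (le_trans (y := \sum_(a < n) K * K)); last first.
  by rewrite sumr_const card_ord mulr_natl.
apply: ler_sum => a _.
have := @RE_abs _ _ _ P (fun w => Zf a w * Zf a w) (K * K).
move=> h; rewrite (le_trans (ler_norm _))// h//; first by apply: bmfM; exact: bZ.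
by move=> w; rewrite normrM ler_pM// Z_bnd.
Qed.


Lemma Fmeas (c : R) n : measurable [set w | c < `|Sf n w|].
Proof.
have -> : [set w | c < `|Sf n w|] = (fun w => `|Sf n w|) @^-1` [set` `]c, +oo[].
  by apply/seteqP; split => w /=; rewrite in_itv /= andbT.
apply: preim_meas; last exact: measurable_itv.
apply: measurableT_comp; first exact: normr_measurable.
exact: bmf_meas (bS n).
Qed.

Lemma tail_bnd (c : R) n : 0 < c ->
  fine (P [set w | c < `|Sf n w|]) * (c * c) <= n%:R * (K * K).
Proof.
move=> c0; apply: le_trans (S2_bnd n).
rewrite mulrC -RE_indic; last exact: Fmeas.
rewrite -REZ; last by apply: bmf_indic; exact: Fmeas.
apply: RE_le.
- by apply: (@bmfM _ _ _ (cst (c * c))); [exact: bmf_cst|apply: bmf_indic; exact: Fmeas].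
- by apply: bmfM; exact: bS.
move=> w; rewrite indicE; case: (boolP (w \in _)) => [/set_mem /= h|_].
  have -> : Sf n w ^+ 2 = `|Sf n w| * `|Sf n w| by rewrite -normrM -expr2 ger0_norm ?sqr_ge0.
  by rewrite mulr1 ler_pM ?ltW.
by rewrite mulr0 sqr_ge0.
Qed.

Definition Gs (j k : nat) := [set w |
  j.+1%:R^-1 * (k.+1 * k.+1)%N%:R < `|Sf (k.+1 * k.+1)%N w|].

Lemma Gs_meas j k : measurable (Gs j k).
Proof. exact: Fmeas. Qed.

Lemma PG j k : (P (Gs j k) <= ((K * K * (j.+1%:R * j.+1%:R)) / (k.+1 * k.+1)%N%:R)%:E)%E.
Proof.
rewrite fineP; last exact: Gs_meas.
rewrite lee_fin.
set J : R := j.+1%:R.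
set m : R := (k.+1 * k.+1)%N%:R.
have J0 : 0 < J by rewrite ltr0n.
have m0 : 0 < m by rewrite ltr0n muln_gt0.
have J'0 : 0 < J^-1 by rewrite invr_gt0.
have h := tail_bnd (k.+1 * k.+1)%N (mulr_gt0 J'0 m0).
rewrite ler_pdivlMr//.
have -> : fine (P (Gs j k)) * m =
  fine (P (Gs j k)) * (J^-1 * m * (J^-1 * m)) * (J * J / m).
  by field; rewrite ?gt_eqF.
apply: (le_trans (ler_wpM2r _ h)); first by rewrite divr_ge0// mulr_ge0// ltW.
rewrite -/m le_eqVlt; apply/orP; left; apply/eqP; field; rewrite gt_eqF//.
Qed.

Lemma sumG j : (\sum_(k <oo) P (Gs j k) < +oo)%E.
Proof.
have C0 : 0 <= K * K * (j.+1%:R * j.+1%:R) by rewrite !mulr_ge0.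
apply: le_lt_trans (series_bnd C0).
apply: lee_nneseries => //= k _; exact: (PG j k).
Qed.

Lemma null j : P (lim_sup_set (Gs j)) = 0%E.
Proof. by apply: (@lim_sup_set_cvg0 _ _ _ P (Gs j)); [exact: Gs_meas|exact: sumG]. Qed.

Lemma ae_conv : {ae P, forall w,
  (fun k => k.+1%:R^-1 * Sf k.+1 w) @ \oo --> (0 : R)}.
Proof.
apply: (@negligibleS _ _ _ _ (\bigcup_j lim_sup_set (Gs j))).
  move=> w /= nconv; apply: contrapT => nU; apply: nconv.
  apply: (@det _ K (fun n => Sf n w)) => //.
  - by rewrite mulr_ge0.
  - by move=> n; rewrite /Sf big_ord_recr /= addrAC subrr add0r Z_bnd.
  move=> j; apply: contrapT => hne; apply: nU; exists j => // n _.
  apply: contrapT => hno; apply: hne; exists n => k hk.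
  rewrite leNgt; apply/negP => hlt; apply: hno; exists k => //.
apply: negligible_bigcup => j; exists (lim_sup_set (Gs j)); split => //; last exact: null.
apply: bigcap_measurable; first by exists 0%N.
move=> n _; apply: bigcup_measurable => k _; exact: Gs_meas.
Qed.

End Moment.


Unset Implicit Arguments.

Theorem mainTheorem1 (d : measure_display) (T : measurableType d) (R : realType)
  (P : probability T R) (X Y : nat -> {RV P >-> R})
  (hXb : exists M : R, forall (t : nat) (w : T), `|X t w| <= M)
  (hYb : exists M : R, forall (t : nat) (w : T), `|Y t w| <= M)
  (hY0 : forall t : nat, ('E_P[Y t] = 0)%E)
  (hYind : mutually_independent P (fun t => Y t : T -> R))
  (hYid : identically_distributed P (fun t => Y t : T -> R))
  (hXY : independent_seqs P (fun t => X t : T -> R) (fun t => Y t : T -> R)) :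
  {ae P, forall w : T,
    (fun k : nat => k.+1%:R^-1 * \sum_(t < k.+1) (X t w * Y t w)) @ \oo --> (0 : R)}.
Proof.
have [Mx hMx] := hXb.
have [My hMy] := hYb.
pose N := maxn (Num.Def.archi_bound `|Mx|) (Num.Def.archi_bound `|My|).
have XN : forall t w, `|(X t : T -> R) w| < N%:R.
  move=> t w; apply: (le_lt_trans (hMx t w)); apply: (le_lt_trans (ler_norm _)).
  apply: (lt_le_trans (archi_boundP (normr_ge0 _))).
  by rewrite ler_nat leq_maxl.
have YN : forall t w, `|(Y t : T -> R) w| < N%:R.
  move=> t w; apply: (le_lt_trans (hMy t w)); apply: (le_lt_trans (ler_norm _)).
  apply: (lt_le_trans (archi_boundP (normr_ge0 _))).
  by rewrite ler_nat leq_maxr.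
have mX : forall t, measurable_fun setT (X t : T -> R) by move=> t; exact: measurable_funP.
have mY : forall t, measurable_fun setT (Y t : T -> R) by move=> t; exact: measurable_funP.
have Y0 : forall t, RE P (Y t : T -> R) = 0 by move=> t; rewrite /RE hY0.
exact: (@ae_conv d T R P (fun t => X t : T -> R) (fun t => Y t : T -> R) N mX mY XN YN Y0 hYind hXY).
Qed.
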